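(* Let $V$ be the simple branching: the quotient of the disjoint union $R_1\sqcup R_2$ of two copies of $\mathbb{R}$ by the equivalence relation identifying the point of coordinate $t$ in $R_1$ with the point of coordinate $t$ in $R_2$ whenever $t<0$ (and identifying nothing else). Then $V$ admits two $C^\infty$-differentiable structures that are not isomorphic, i.e. there is no homeomorphism from $V$ with the first structure to $V$ with the second structure which is $C^\infty$ and has a $C^\infty$ inverse.
   Context: A topological manifold need not be Hausdorff. A $C^r$-differentiable structure ($r$ a positive integer or $\infty$) on an $n$-dimensional manifold $V$ is given by an atlas of charts $h_i:\mathbb{R}^n\to V$ (homeomorphisms onto open subsets covering $V$) such that every transition map $h_j^{-1}h_i$, from $h_i^{-1}(U_i\cap U_j)$ to $h_j^{-1}(U_i\cap U_j)$, is a $C^r$ homeomorphism between open subsets of $\mathbb{R}^n$; two atlases define the same structure if their union is still such an atlas. A map between $C^r$ manifolds is $C^r$ if it is $C^r$ when read in charts. *)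

(* Defs.v *)
From Stdlib Require Import Reals Lra ProofIrrelevance.
From Coquelicot Require Import Coquelicot.
Open Scope R_scope.

(** V is the quotient of R_1 ⊔ R_2 (two copies of R) identifying the point t
    of R_1 with the point t of R_2 whenever t < 0.  We realise the quotient by
    canonical representatives: (true, t) is the class of t in R_1 (and, for
    t < 0, also of t in R_2); (false, t) with 0 <= t is the class of t in R_2. *)
Definition V : Type := {p : bool * R | fst p = true \/ 0 <= snd p}.

Definition i1 (t : R) : V := exist _ (true, t) (or_introl eq_refl).
Definition i2 (t : R) : V :=
  match Rlt_dec t 0 with
  | left _ => i1 t
  | right H => exist _ (false, t) (or_intror (Rnot_lt_le _ _ H))
  end.

Lemma V_cover : forall v : V, (exists t, v = i1 t) \/ (exists t, v = i2 t).
Proof.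
  intros [[b t] H]. destruct b.
  - left. exists t. unfold i1. f_equal. apply proof_irrelevance.
  - right. exists t. unfold i2. destruct (Rlt_dec t 0) as [Hl|Hn].
    + exfalso. destruct H as [H|H]; [discriminate|simpl in H; lra].
    + f_equal. apply proof_irrelevance.
Qed.

Lemma i1_inj : forall s t, i1 s = i1 t -> s = t.
Proof. intros s t H. unfold i1 in H. inversion H. reflexivity. Qed.

Lemma i2_inj : forall s t, i2 s = i2 t -> s = t.
Proof.
  intros s t H. unfold i2, i1 in H.
  destruct (Rlt_dec s 0); destruct (Rlt_dec t 0); inversion H; reflexivity.
Qed.

Lemma i1_i2 : forall s t, i1 s = i2 t <-> (s = t /\ t < 0).
Proof.
  intros s t; split.
  - intros H. unfold i2, i1 in H. destruct (Rlt_dec t 0).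
    + inversion H. split; auto.
    + inversion H.
  - intros [-> Ht]. unfold i2. destruct (Rlt_dec t 0); [reflexivity|contradiction].
Qed.

Definition openV (U : V -> Prop) : Prop :=
  open (fun t => U (i1 t)) /\ open (fun t => U (i2 t)).

Definition contRV (h : R -> V) : Prop :=
  forall W : V -> Prop, openV W -> open (fun t => W (h t)).
Definition contVV (f : V -> V) : Prop :=
  forall W : V -> Prop, openV W -> openV (fun v => W (f v)).

Definition is_chart (h : R -> V) : Prop :=
  (forall s t, h s = h t -> s = t) /\
  contRV h /\
  openV (fun v => exists t, h t = v) /\
  (forall O : R -> Prop, open O -> openV (fun v => exists t, O t /\ h t = v)).

(** g : R -> R is C^oo on the open set D (only values near D matter). *)
Definition smooth_on (D : R -> Prop) (g : R -> R) : Prop :=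
  forall (n : nat) (x : R), D x -> ex_derive_n g n x.

(** The map k^{-1} o f o h, defined on h^{-1}(f^{-1}(image k)), is C^oo. *)
Definition smooth_in_charts (h : R -> V) (f : V -> V) (k : R -> V) : Prop :=
  exists g : R -> R,
    (forall t, (exists s, k s = f (h t)) -> k (g t) = f (h t)) /\
    smooth_on (fun t => exists s, k s = f (h t)) g.

Definition Cinf_atlas (I : Type) (h : I -> R -> V) : Prop :=
  (forall i, is_chart (h i)) /\
  (forall v : V, exists i t, h i t = v) /\
  (forall i j, smooth_in_charts (h i) (fun v => v) (h j)).

Definition Cinf_map (I : Type) (h : I -> R -> V) (J : Type) (k : J -> R -> V)
  (f : V -> V) : Prop :=
  forall i j, smooth_in_charts (h i) f (k j).

Definition Cinf_isomorphic (I : Type) (h : I -> R -> V) (J : Type) (k : J -> R -> V)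
  : Prop :=
  exists f g : V -> V,
    (forall v, g (f v) = v) /\ (forall v, f (g v) = v) /\
    contVV f /\ contVV g /\
    Cinf_map I h J k f /\ Cinf_map J k I h g.

(* Main.v *)
Require Import Defs.
From Stdlib Require Import Reals Lra ProofIrrelevance.
From Coquelicot Require Import Coquelicot.
Open Scope R_scope.

Definition psi (s : R) : R := s * Rabs s.
Definition phi (t : R) : R := sqrt ((t + Rabs t)/2) - sqrt ((Rabs t - t)/2).
Definition k2 (s : R) : V := i2 (psi s).

Lemma psi_neg s : s < 0 -> psi s = - (s*s).
Proof. intro; unfold psi; rewrite Rabs_left; lra. Qed.
Lemma psi_lt s : psi s < 0 <-> s < 0.
Proof. unfold psi; destruct (Rcase_abs s) as [H|H].
 - rewrite Rabs_left by lra; split; intros; nra.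
 - rewrite Rabs_right by lra; split; intros; nra. Qed.
Lemma phi_psi s : phi (psi s) = s.
Proof. unfold phi, psi. destruct (Rcase_abs s) as [H|H].
 - rewrite (Rabs_left s) by lra. rewrite (Rabs_left (s * - s)) by nra.
   replace ((s * - s + - (s * - s)) / 2) with 0 by lra.
   replace ((- (s * - s) - s * - s) / 2) with (s*s) by lra.
   rewrite sqrt_0. replace (s*s) with ((-s)*(-s)) by ring. rewrite sqrt_square; lra.
 - rewrite (Rabs_right s) by lra. rewrite (Rabs_right (s * s)) by nra.
   replace ((s * s - s * s) / 2) with 0 by lra.
   replace ((s * s + s * s) / 2) with (s*s) by lra.
   rewrite sqrt_0, sqrt_square; lra. Qed.

Lemma psi_phi t : psi (phi t) = t.
Proof. unfold phi, psi. destruct (Rcase_abs t) as [H|H].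
 - rewrite (Rabs_left t) by lra.
   replace ((t + - t) / 2) with 0 by lra. replace ((- t - t) / 2) with (-t) by lra.
   rewrite sqrt_0. assert (0 < sqrt (-t)) by (apply sqrt_lt_R0; lra).
   rewrite Rabs_left by lra.
   replace ((0 - sqrt (- t)) * - (0 - sqrt (- t))) with (- (sqrt (-t) * sqrt (-t))) by ring.
   rewrite sqrt_sqrt; lra.
 - rewrite (Rabs_right t) by lra.
   replace ((t + t) / 2) with t by lra. replace ((t - t) / 2) with 0 by lra.
   rewrite sqrt_0. assert (0 <= sqrt t) by (apply sqrt_pos).
   rewrite Rabs_right by lra.
   replace ((sqrt t - 0) * (sqrt t - 0)) with ((sqrt t * sqrt t)) by ring.
   rewrite sqrt_sqrt; lra. Qed.

Lemma cont_psi x : continuous psi x.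
Proof. unfold psi. apply (continuous_mult (fun y => y) Rabs). apply continuous_id. apply continuous_Rabs. Qed.

Lemma cont_phi x : continuous phi x.
Proof. apply continuity_pt_filterlim. unfold phi.
  apply continuity_pt_minus; apply continuity_pt_comp with (f2 := sqrt).
  - apply continuity_pt_mult. apply continuity_pt_plus. apply continuity_pt_id.
    apply Rcontinuity_abs. apply continuity_pt_const. intros a b; reflexivity.
  - apply continuity_pt_filterlim. apply continuous_sqrt.
  - apply continuity_pt_mult. apply continuity_pt_minus. 
    apply Rcontinuity_abs. apply continuity_pt_id. apply continuity_pt_const. intros a b; reflexivity.
  - apply continuity_pt_filterlim. apply continuous_sqrt.
Qed.

Lemma open_pre (f : R -> R) (O : R -> Prop) : (forall x, continuous f x) -> open O -> open (fun x => O (f x)).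
Proof. intros Hc HO. apply open_comp; auto. intros x _; apply Hc. Qed.

Lemma i2_neg t : t < 0 -> i2 t = i1 t.
Proof. intro H. symmetry. apply i1_i2. auto. Qed.

Lemma is_chart_i1 : is_chart i1.
Proof. split; [exact i1_inj|]. split; [intros W [H1 H2]; exact H1|]. split.
 - split.
   + apply (open_ext (fun _ => True)); [|apply open_true]. intro x; split; eauto.
   + apply (open_ext (fun u => u < 0)); [|apply open_lt]. intro x; split.
     * intro; exists x; apply i1_i2; auto.
     * intros [t Ht]; apply i1_i2 in Ht; tauto.
 - intros O HO; split.
   + apply (open_ext O); auto. intro x; split.
     * intro; exists x; auto.
     * intros [t [Ht E]]; apply i1_inj in E; subst; auto.
   + apply (open_ext (fun u => u < 0 /\ O u)); [|apply open_and; auto; apply open_lt]. intro x; split.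
     * intros [H1 H2]; exists x; split; auto; apply i1_i2; auto.
     * intros [t [Ht E]]; apply i1_i2 in E; destruct E; subst; auto.
Qed.

Lemma is_chart_i2 : is_chart i2.
Proof. split; [exact i2_inj|]. split; [intros W [H1 H2]; exact H2|]. split.
 - split.
   + apply (open_ext (fun u => u < 0)); [|apply open_lt]. intro x; split.
     * intro; exists x; symmetry; apply i1_i2; auto.
     * intros [t Ht]; symmetry in Ht; apply i1_i2 in Ht; destruct Ht; subst; auto.
   + apply (open_ext (fun _ => True)); [|apply open_true]. intro x; split; eauto.
 - intros O HO; split.
   + apply (open_ext (fun u => u < 0 /\ O u)); [|apply open_and; auto; apply open_lt]. intro x; split.
     * intros [H1 H2]; exists x; split; auto; symmetry; apply i1_i2; auto.
     * intros [t [Ht E]]; symmetry in E; apply i1_i2 in E; destruct E; subst; auto.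
   + apply (open_ext O); auto. intro x; split.
     * intro; exists x; auto.
     * intros [t [Ht E]]; apply i2_inj in E; subst; auto.
Qed.

Lemma k2_inj s t : k2 s = k2 t -> s = t.
Proof. unfold k2; intro H. apply i2_inj in H. rewrite <- (phi_psi s), <- (phi_psi t), H; auto. Qed.

Lemma is_chart_k2 : is_chart k2.
Proof. split; [exact k2_inj|]. split.
 { intros W [H1 H2]. unfold k2. apply (open_pre psi (fun x => W (i2 x))); auto. apply cont_psi. }
 split.
 - split.
   + apply (open_ext (fun u => u < 0)); [|apply open_lt]. intro x; split.
     * intro; exists (phi x); unfold k2; rewrite psi_phi; symmetry; apply i1_i2; auto.
     * intros [t Ht]; symmetry in Ht; apply i1_i2 in Ht; destruct Ht; subst; auto.
   + apply (open_ext (fun _ => True)); [|apply open_true]. intro x; split; [|auto].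
     intros _; exists (phi x); unfold k2; rewrite psi_phi; auto.
 - intros O HO; split.
   + apply (open_ext (fun u => u < 0 /\ O (phi u))); [|apply open_and; [apply open_lt|apply open_pre; auto; apply cont_phi]]. intro x; split.
     * intros [H1 H2]; exists (phi x); split; auto; unfold k2; rewrite psi_phi; symmetry; apply i1_i2; auto.
     * intros [t [Ht E]]; symmetry in E; apply i1_i2 in E; destruct E as [E1 E2]; subst. rewrite phi_psi; auto.
   + apply (open_ext (fun u => O (phi u))); [|apply open_pre; auto; apply cont_phi]. intro x; split.
     * intro; exists (phi x); unfold k2; rewrite psi_phi; auto.
     * intros [t [Ht E]]; apply i2_inj in E; subst; rewrite phi_psi; auto.
Qed.

Lemma smooth_family (U : R -> Prop) (f : R -> R) (F : nat -> R -> R) :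
  open U -> (forall x, U x -> f x = F O x) ->
  (forall n x, U x -> is_derive (F n) x (F (S n) x)) ->
  forall n x, U x -> ex_derive_n f n x /\ Derive_n f n x = F n x.
Proof.
  intros HU H0 HD n. induction n as [|n IH]; intros x Hx.
  - split; [exact I| simpl; auto].
  - assert (Hl : locally x (fun t => F n t = Derive_n f n t)).
    { apply filter_imp with (2 := HU x Hx). intros t Ht. symmetry; apply IH; auto. }
    assert (Hd : is_derive (Derive_n f n) x (F (S n) x)).
    { apply is_derive_ext_loc with (1 := Hl). apply HD; auto. }
    split.
    + simpl. eexists; exact Hd.
    + simpl. apply is_derive_unique. exact Hd.
Qed.

Fixpoint cc (n : nat) : R := match n with O => -1 | S n => - cc n * (/2 - INR n) end.
Definition Fm (n : nat) (t : R) : R := cc n * Rpower (-t) (/2 - INR n).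

Lemma Fm_der n t : t < 0 -> is_derive (Fm n) t (Fm (S n) t).
Proof. intro Ht. unfold Fm.
  assert (H1 : is_derive (fun u => Rpower u (/2 - INR n)) (-t) ((/2 - INR n) * Rpower (-t) (/2 - INR n - 1))).
  { apply is_derive_Reals. apply derivable_pt_lim_power. lra. }
  assert (H2 : is_derive (fun u : R => - u) t (-1)).
  { apply is_derive_Reals. apply derivable_pt_lim_opp. apply derivable_pt_lim_id. }
  pose proof (is_derive_comp _ _ _ _ _ H1 H2) as H3.
  pose proof (is_derive_scal _ _ (cc n) _ H3) as H4.
  replace (cc (S n) * Rpower (- t) (/ 2 - INR (S n))) with (cc n * scal (-1) ((/2 - INR n) * Rpower (-t) (/2 - INR n - 1))).
  exact H4.
  rewrite S_INR. simpl cc. replace (/ 2 - (INR n + 1)) with (/2 - INR n - 1) by ring.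
  change (scal (-1) ((/2 - INR n) * Rpower (-t) (/2 - INR n - 1))) with (mult (-1) ((/2 - INR n) * Rpower (-t) (/2 - INR n - 1))).
  unfold mult; simpl. ring.
Qed.

Lemma sqrt_smooth n t : t < 0 -> ex_derive_n (fun u => - sqrt (-u)) n t.
Proof. intro Ht. apply (smooth_family (fun u => u < 0) _ Fm); auto.
  - apply open_lt.
  - intros x Hx. unfold Fm. simpl. rewrite Rminus_0_r, Rpower_sqrt by lra. ring.
  - intros; apply Fm_der; auto.
Qed.

Lemma cont_eps (F : R -> R) (x : R) : continuous F x -> forall eps, 0 < eps ->
  exists d, 0 < d /\ forall y, Rabs (y - x) < d -> Rabs (F y - F x) < eps.
Proof. intros H eps He. apply continuity_pt_filterlim in H.
  destruct (H eps He) as [d [Hd Hy]]. exists d; split; auto. intros y Hy'.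
  destruct (Req_dec y x) as [E|E]. { subst. rewrite Rminus_eq_0, Rabs_R0; auto. }
  apply Hy. split. split; [exact I| auto]. exact Hy'. Qed.

Lemma left_eq (F G : R -> R) d0 : 0 < d0 -> continuous F 0 -> continuous G 0 ->
  (forall t, -d0 < t < 0 -> F t = G t) -> F 0 = G 0.
Proof. intros Hd HF HG HE.
  destruct (Req_dec (F 0) (G 0)) as [E|E]; auto. exfalso.
  set (eps := Rabs (F 0 - G 0) / 2).
  assert (Heps : 0 < eps). { unfold eps. assert (E2 : F 0 - G 0 <> 0) by lra. apply Rabs_pos_lt in E2. lra. }
  destruct (cont_eps F 0 HF eps Heps) as [d1 [Hd1 H1]].
  destruct (cont_eps G 0 HG eps Heps) as [d2 [Hd2 H2]].
  set (t := - Rmin d0 (Rmin d1 d2) / 2).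
  assert (Hm1 : Rmin d0 (Rmin d1 d2) <= d0) by apply Rmin_l.
  assert (Hm2 : Rmin d0 (Rmin d1 d2) <= d1) by (eapply Rle_trans; [apply Rmin_r|apply Rmin_l]).
  assert (Hm3 : Rmin d0 (Rmin d1 d2) <= d2) by (eapply Rle_trans; [apply Rmin_r|apply Rmin_r]).
  assert (Hm0 : 0 < Rmin d0 (Rmin d1 d2)) by (repeat apply Rmin_pos; auto).
  assert (Ht : Rabs (t - 0) = Rmin d0 (Rmin d1 d2) / 2).
  { unfold t. rewrite Rabs_left; lra. }
  specialize (H1 t). specialize (H2 t). rewrite Ht in H1, H2.
  rewrite HE in H1 by (unfold t; lra).
  assert (A := H1 ltac:(lra)). assert (B := H2 ltac:(lra)).
  assert (C := Rabs_triang (G t - F 0) (G 0 - G t)).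
  rewrite Rabs_minus_sym in A.
  replace (F 0 - G t + (G t - G 0)) with (F 0 - G 0) in C by ring.
  assert (C' := Rabs_triang (F 0 - G t) (G t - G 0)).
  replace (F 0 - G t + (G t - G 0)) with (F 0 - G 0) in C' by ring.
  unfold eps in *. lra.
Qed.

Lemma left_le (F : R -> R) d0 : 0 < d0 -> continuous F 0 -> (forall t, -d0 < t < 0 -> F t < 0) -> F 0 <= 0.
Proof. intros Hd HF HN. destruct (Rle_dec (F 0) 0) as [L|L]; auto. exfalso.
  destruct (cont_eps F 0 HF (F 0) ltac:(lra)) as [d1 [Hd1 H1]].
  set (t := - Rmin d0 d1 / 2).
  assert (Rmin d0 d1 <= d0) by apply Rmin_l. assert (Rmin d0 d1 <= d1) by apply Rmin_r.
  assert (0 < Rmin d0 d1) by (apply Rmin_pos; auto).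
  assert (Ht : Rabs (t - 0) = Rmin d0 d1 / 2). { unfold t. rewrite Rabs_left; lra. }
  specialize (H1 t). rewrite Ht in H1. specialize (H1 ltac:(lra)).
  specialize (HN t ltac:(unfold t; lra)). apply Rabs_def2 in H1. lra. Qed.

Lemma left_deriv (r q : R -> R) d0 l1 l2 : 0 < d0 -> is_derive r 0 l1 -> is_derive q 0 l2 -> r 0 = q 0 ->
  (forall t, -d0 < t < 0 -> r t = q t) -> l1 = l2.
Proof. intros Hd H1 H2 E0 HE. apply is_derive_Reals in H1, H2.
  destruct (Req_dec l1 l2) as [E|E]; auto. exfalso.
  set (eps := Rabs (l1 - l2) / 2).
  assert (Heps : 0 < eps). { unfold eps. assert (E2 : l1 - l2 <> 0) by lra. apply Rabs_pos_lt in E2. lra. }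
  destruct (H1 eps Heps) as [d1 D1]. destruct (H2 eps Heps) as [d2 D2].
  set (h := - Rmin d0 (Rmin d1 d2) / 2).
  assert (Hm1 : Rmin d0 (Rmin d1 d2) <= d0) by apply Rmin_l.
  assert (Hm2 : Rmin d0 (Rmin d1 d2) <= d1) by (eapply Rle_trans; [apply Rmin_r|apply Rmin_l]).
  assert (Hm3 : Rmin d0 (Rmin d1 d2) <= d2) by (eapply Rle_trans; [apply Rmin_r|apply Rmin_r]).
  assert (Hm0 : 0 < Rmin d0 (Rmin d1 d2)) by (repeat apply Rmin_pos; auto; apply cond_pos).
  assert (Hh : Rabs h = Rmin d0 (Rmin d1 d2) / 2). { unfold h. rewrite Rabs_left; lra. }
  assert (hn : h <> 0) by (unfold h; lra).
  specialize (D1 h hn ltac:(rewrite Hh; lra)). specialize (D2 h hn ltac:(rewrite Hh; lra)).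
  rewrite Rplus_0_l in D1, D2. rewrite HE, E0 in D1 by (unfold h; lra).
  set (Q := (q h - q 0) / h) in *.
  assert (C' := Rabs_triang (l1 - Q) (Q - l2)).
  replace (l1 - Q + (Q - l2)) with (l1 - l2) in C' by ring.
  rewrite Rabs_minus_sym in D1. unfold eps in *. lra.
Qed.

Lemma der_eq (f : R -> R) x l l' : is_derive f x l -> l = l' -> is_derive f x l'.
Proof. intros; subst; auto. Qed.

Lemma sq_deriv0 (r' : R -> R) : ex_derive r' 0 -> r' 0 = 0 -> is_derive (fun t => - (r' t * r' t)) 0 0.
Proof. intros [l Hl] E.
  pose proof (is_derive_opp _ _ _ (is_derive_mult _ _ _ _ _ Hl Hl ltac:(intros; apply Rmult_comm))) as H.
  refine (der_eq _ _ _ _ H _). rewrite E. unfold opp, plus, mult; simpl; ring.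
Qed.

Definition hA (b : bool) : R -> V := if b then i1 else i2.
Definition kB (b : bool) : R -> V := if b then i1 else k2.

Lemma smooth_idf (D : R -> Prop) : smooth_on D (fun t => t).
Proof. intros n x _. apply ex_derive_n_ext with (f := fun t => t ^ 1).
  intro; simpl; ring. apply ex_derive_n_pow. Qed.

Lemma smooth_psi n x : x < 0 -> ex_derive_n psi n x.
Proof. intro Hx. apply ex_derive_n_ext_loc with (f := fun t => - (t ^ 2)).
  - apply filter_imp with (2 := open_lt 0 x Hx). intros t Ht. simpl. rewrite psi_neg; auto; ring.
  - apply ex_derive_n_opp. apply ex_derive_n_pow. Qed.

Lemma smooth_phi n x : x < 0 -> ex_derive_n phi n x.
Proof. intro Hx. apply ex_derive_n_ext_loc with (f := fun u => - sqrt (- u)).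
  - apply filter_imp with (2 := open_lt 0 x Hx). intros t Ht. unfold phi.
    rewrite Rabs_left by auto. replace ((t + - t)/2) with 0 by lra. replace ((- t - t) / 2) with (-t) by lra.
    rewrite sqrt_0; ring.
  - apply sqrt_smooth; auto. Qed.

Lemma atlasA : Cinf_atlas bool hA.
Proof. split; [|split].
 - intros [|]; [apply is_chart_i1|apply is_chart_i2].
 - intro v. destruct (V_cover v) as [[t E]|[t E]]; [exists true|exists false]; exists t; auto.
 - intros [|] [|]; exists (fun t => t); (split; [|apply smooth_idf]); simpl; intros t [s Hs]; auto.
   + symmetry in Hs. apply i1_i2 in Hs. destruct Hs; subst; apply i2_neg; auto.
   + apply i1_i2 in Hs. destruct Hs; subst. symmetry; apply i2_neg; auto.
Qed.

Lemma atlasB : Cinf_atlas bool kB.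
Proof. split; [|split].
 - intros [|]; [apply is_chart_i1|apply is_chart_k2].
 - intro v. destruct (V_cover v) as [[t E]|[t E]].
   + exists true, t; auto.
   + exists false, (phi t). simpl. unfold k2. rewrite psi_phi; auto.
 - intros [|] [|]; simpl.
   + exists (fun t => t); split; [|apply smooth_idf]. intros t [s Hs]; auto.
   + exists phi; split.
     * intros t [s Hs]. unfold k2 in *. symmetry in Hs. apply i1_i2 in Hs. destruct Hs as [E1 E2].
       subst. rewrite phi_psi. apply i2_neg; auto.
     * intros n t [s Hs]. unfold k2 in Hs. symmetry in Hs. apply i1_i2 in Hs. destruct Hs as [E1 E2].
       subst. apply smooth_phi; auto.
   + exists psi; split.
     * intros t [s Hs]. unfold k2 in *. apply i1_i2 in Hs. destruct Hs as [E1 E2].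
       subst. symmetry; apply i2_neg; auto.
     * intros n t [s Hs]. unfold k2 in Hs. apply i1_i2 in Hs. destruct Hs as [E1 E2].
       apply smooth_psi. apply psi_lt. subst; auto.
   + exists (fun t => t); split; [|apply smooth_idf]. intros t [s Hs]; auto.
Qed.

Lemma rep_open1 (F : V -> V) (kap : R -> V) : contVV F -> is_chart kap ->
  open (fun t => exists s, kap s = F (i1 t)).
Proof. intros cF [_ [_ [Hop _]]]. exact (proj1 (cF _ Hop)). Qed.
Lemma rep_open2 (F : V -> V) (kap : R -> V) : contVV F -> is_chart kap ->
  open (fun t => exists s, kap s = F (i2 t)).
Proof. intros cF [_ [_ [Hop _]]]. exact (proj2 (cF _ Hop)). Qed.

Lemma loc_left (P : R -> Prop) : locally 0 P -> exists d, 0 < d /\ forall t, -d < t < 0 -> P t.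
Proof. intros [eps He]. exists eps; split; [apply cond_pos|]. intros t Ht. apply He.
  change (Rabs (t - 0) < eps). rewrite Rabs_left; lra. Qed.

Lemma branch_case (r r' : R -> R) d0 : 0 < d0 -> ex_derive r 0 -> ex_derive r' 0 ->
  (forall t, -d0 < t < 0 -> i1 (r t) = k2 (r' t)) -> i1 (r 0) <> k2 (r' 0) ->
  r 0 = 0 /\ is_derive r 0 0.
Proof. intros Hd Dr Dr' HE Hne.
  assert (HE' : forall t, -d0 < t < 0 -> r t = psi (r' t) /\ psi (r' t) < 0).
  { intros t Ht. apply i1_i2. apply HE; auto. }
  assert (Cr := ex_derive_continuous _ _ Dr). assert (Cr' := ex_derive_continuous _ _ Dr').
  assert (E0 : r 0 = psi (r' 0)).
  { apply (left_eq r (fun t => psi (r' t)) d0); auto.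
    apply continuous_comp; auto. apply cont_psi. intros; apply HE'; auto. }
  assert (L0 : r 0 <= 0).
  { apply (left_le r d0); auto. intros t Ht. destruct (HE' t Ht) as [A B]. rewrite A; auto. }
  assert (Z : r 0 = 0).
  { destruct L0 as [L|L]; auto. exfalso. apply Hne. unfold k2. rewrite <- E0. symmetry; apply i2_neg; auto. }
  assert (Z' : r' 0 = 0).
  { rewrite <- (phi_psi (r' 0)), <- E0, Z. rewrite <- (phi_psi 0) at 2. f_equal. unfold psi; ring. }
  split; auto.
  destruct Dr as [l Hl]. 
  assert (l = 0).
  { apply (left_deriv r (fun t => - (r' t * r' t)) d0); auto.
    - apply sq_deriv0; auto.
    - rewrite Z, Z'; ring.
    - intros t Ht. destruct (HE' t Ht) as [A B]. rewrite A. apply psi_neg. apply psi_lt; auto. }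
  subst; auto.
Qed.

Lemma final_contra (f g : V -> V) (h : R -> V) (r c : R -> R) :
  (forall s t, h s = h t -> s = t) -> (forall v, g (f v) = v) ->
  locally 0 (fun t => i1 (r t) = f (h t)) -> r 0 = 0 -> is_derive r 0 0 ->
  locally 0 (fun u => h (c u) = g (i1 u)) -> ex_derive c 0 -> False.
Proof. intros Hinj Hgf Hr Z Dr Hc [lc Dc].
  assert (Cr : filterlim r (locally 0) (locally (r 0))).
  { apply (ex_derive_continuous r 0). exists 0. exact Dr. }
  assert (Hc' : locally 0 (fun t => h (c (r t)) = g (i1 (r t)))).
  { apply (Cr (fun u => h (c u) = g (i1 u))). rewrite Z. exact Hc. }
  assert (Hid : locally 0 (fun t => t = c (r t))).
  { apply filter_imp with (2 := filter_and _ _ Hr Hc'). intros t [A B].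
    apply Hinj. rewrite B, A, Hgf. auto. }
  assert (D1 := is_derive_ext_loc _ _ _ _ Hid (is_derive_id 0)).
  rewrite <- Z in Dc. assert (D2 := is_derive_comp _ _ _ _ _ Dc Dr).
  apply is_derive_unique in D1. apply is_derive_unique in D2.
  assert (E : 1 = 0 * lc).
  { transitivity (Derive (fun t => c (r t)) 0). symmetry; exact D1. exact D2. }
  lra.
Qed.

Lemma not_iso : ~ Cinf_isomorphic bool hA bool kB.
Proof. intros [f [g [Hgf [Hfg [cf [cg [Hf Hg]]]]]]].
  destruct atlasB as [chB [covB _]]. destruct atlasA as [chA _].
  destruct (covB (f (i1 0))) as [j [s Hs]]. destruct (covB (f (i2 0))) as [j' [s' Hs']].
  destruct (Hf true j) as [r [Hr Hrs]]. destruct (Hf false j') as [r' [Hr' Hr's]].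
  simpl in Hr, Hrs, Hr', Hr's.
  assert (OD := rep_open1 f (kB j) cf (chB j)). assert (OD' := rep_open2 f (kB j') cf (chB j')).
  assert (D0 : exists s, kB j s = f (i1 0)) by eauto.
  assert (D0' : exists s, kB j' s = f (i2 0)) by eauto.
  assert (Dr : ex_derive r 0) by exact (Hrs 1%nat 0 D0).
  assert (Dr' : ex_derive r' 0) by exact (Hr's 1%nat 0 D0').
  assert (LD := OD 0 D0). assert (LD' := OD' 0 D0').
  destruct (loc_left _ (filter_and _ _ LD LD')) as [d0 [Hd0 Hleft]].
  assert (HE : forall t, -d0 < t < 0 -> kB j (r t) = kB j' (r' t)).
  { intros t Ht. destruct (Hleft t Ht) as [A B]. rewrite Hr, Hr' by auto. rewrite i2_neg by lra; auto. }
  assert (Hne : kB j (r 0) <> kB j' (r' 0)).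
  { rewrite Hr, Hr' by auto. intro E. apply (f_equal g) in E. rewrite !Hgf in E.
    apply i1_i2 in E. lra. }
  assert (Cr := ex_derive_continuous _ _ Dr). assert (Cr' := ex_derive_continuous _ _ Dr').
  destruct j, j'; simpl in *.
  - apply Hne. f_equal. apply (left_eq r r' d0); auto. intros t Ht. apply i1_inj, HE; auto.
  - destruct (branch_case r r' d0 Hd0 Dr Dr' HE Hne) as [Z Dz].
    destruct (Hg true true) as [c [Hc Hcs]]. simpl in Hc, Hcs.
    assert (OE := rep_open1 g i1 cg is_chart_i1).
    assert (E0 : exists s, i1 s = g (i1 0)).
    { exists 0. rewrite <- Z at 2. rewrite Hr by auto. rewrite Hgf; auto. }
    apply (final_contra f g i1 r c i1_inj Hgf); auto.
    + apply filter_imp with (2 := LD). intros t Ht; auto.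
    + apply filter_imp with (2 := OE 0 E0). intros t Ht; auto.
    + exact (Hcs 1%nat 0 E0).
  - destruct (branch_case r' r d0 Hd0 Dr' Dr) as [Z Dz];
      [intros t Ht; symmetry; apply HE; auto | intro E; apply Hne; symmetry; exact E |].
    destruct (Hg true false) as [c [Hc Hcs]]. simpl in Hc, Hcs.
    assert (OE := rep_open1 g i2 cg is_chart_i2).
    assert (E0 : exists s, i2 s = g (i1 0)).
    { exists 0. rewrite <- Z at 2. rewrite Hr' by auto. rewrite Hgf; auto. }
    apply (final_contra f g i2 r' c i2_inj Hgf); auto.
    + apply filter_imp with (2 := LD'). intros t Ht; auto.
    + apply filter_imp with (2 := OE 0 E0). intros t Ht; auto.
    + exact (Hcs 1%nat 0 E0).
  - apply Hne. f_equal. apply (left_eq r r' d0); auto. intros t Ht. apply k2_inj, HE; auto.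
Qed.

Theorem mainTheorem4 :
  exists (I : Type) (h : I -> R -> V) (J : Type) (k : J -> R -> V),
    Cinf_atlas I h /\ Cinf_atlas J k /\ ~ Cinf_isomorphic I h J k.
Proof.
  exists bool, hA, bool, kB. split; [exact atlasA|split; [exact atlasB|exact not_iso]].
Qed.
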